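(* Let $f_1,f_2,f_3$ be smooth nowhere-vanishing functions on $\mathbb R^3$ each depending only on $x^1$, $g=\frac{1}{f_1^2}dx^1\otimes dx^1+\frac{1}{f_2^2}dx^2\otimes dx^2+\frac{1}{f_3^2}dx^3\otimes dx^3$, and $V=\sum_{k=1}^3V^kE_k$ with $E_i=f_i\frac{\partial}{\partial x^i}$ and $V^1,V^2,V^3$ smooth functions depending only on $x^1$. Then $V$ is a Killing vector field of $(\mathbb R^3,g)$ if and only if one of the following holds: (i) $V^1=c_1\in\mathbb R\setminus\{0\}$, $V^2=c_2$, $V^3=c_3$ with $c_2,c_3\in\mathbb R$, and $f_2,f_3$ are constant; (ii) $V^1=0$, $V^2=\frac{c_2}{f_2}$, $V^3=\frac{c_3}{f_3}$ with $c_2,c_3\in\mathbb R$.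
   Context: $x^1,x^2,x^3$ are the standard coordinates on $\mathbb R^3$. A vector field $V$ is Killing if $\mathcal L_Vg=0$. *)

(* Defs.v *)
From Stdlib Require Import Reals.
From Coquelicot Require Import Coquelicot.
Open Scope R_scope.

(* Points of R^3 ; coordinate index 0,1,2 stands for x^1,x^2,x^3. *)
Definition pt : Type := (R * R * R)%type.

Definition coord (p : pt) (i : nat) : R :=
  match i with
  | O => fst (fst p)
  | S O => snd (fst p)
  | _ => snd p
  end.

Definition upd (p : pt) (i : nat) (t : R) : pt :=
  match i with
  | O => (t, snd (fst p), snd p)
  | S O => (fst (fst p), t, snd p)
  | _ => (fst (fst p), snd (fst p), t)
  end.

Definition partial (i : nat) (F : pt -> R) (p : pt) : R :=
  Derive (fun t => F (upd p i t)) (coord p i).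

Definition sum3 (h : nat -> R) : R := h 0%nat + h 1%nat + h 2%nat.

Definition smooth (h : R -> R) : Prop := forall (n : nat) (x : R), ex_derive_n h n x.

Definition lift1 (h : R -> R) : pt -> R := fun p => h (coord p 0).

Definition fam3 {A : Type} (a1 a2 a3 : A) (k : nat) : A :=
  match k with O => a1 | S O => a2 | _ => a3 end.

(* Vector fields on R^3 are given by their coordinate components W m (m = 0,1,2),
   i.e. W = sum_m W^m d/dx^(m+1); symmetric 2-tensors by components g i j. *)

Definition lie_deriv_metric (W : nat -> pt -> R) (g : nat -> nat -> pt -> R)
  (i j : nat) (p : pt) : R :=
  sum3 (fun m => W m p * partial m (g i j) p
                 + g m j p * partial i (W m) p
                 + g i m p * partial j (W m) p).

Definition Killing (W : nat -> pt -> R) (g : nat -> nat -> pt -> R) : Prop :=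
  forall (i j : nat) (p : pt), (i < 3)%nat -> (j < 3)%nat -> lie_deriv_metric W g i j p = 0.

Definition diag_metric (f1 f2 f3 : R -> R) : nat -> nat -> pt -> R :=
  fun i j p => if Nat.eqb i j then 1 / (lift1 (fam3 f1 f2 f3 i) p) ^ 2 else 0.

Definition Eframe (f1 f2 f3 : R -> R) (k : nat) : nat -> pt -> R :=
  fun m p => if Nat.eqb m k then lift1 (fam3 f1 f2 f3 k) p else 0.

Definition frame_field (f1 f2 f3 V1 V2 V3 : R -> R) : nat -> pt -> R :=
  fun m p => sum3 (fun k => lift1 (fam3 V1 V2 V3 k) p * Eframe f1 f2 f3 k m p).

(* Main.v *)
Require Import Defs.
From Stdlib Require Import Reals Lra Lia.
From Coquelicot Require Import Coquelicot.
Open Scope R_scope.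

Definition wfun (f1 f2 f3 V1 V2 V3 : R -> R) (m : nat) : R -> R :=
  match m with
  | O => fun t => V1 t * f1 t
  | S O => fun t => V2 t * f2 t
  | S (S O) => fun t => V3 t * f3 t
  | _ => fun _ => 0 end.

Lemma fW f1 f2 f3 V1 V2 V3 m p :
  frame_field f1 f2 f3 V1 V2 V3 m p = wfun f1 f2 f3 V1 V2 V3 m (coord p 0).
Proof.
destruct m as [|[|[|m]]]; unfold frame_field, sum3, Eframe, lift1; simpl; ring.
Qed.

Lemma partial_lift (F : pt -> R) h m p :
  (forall q, F q = h (coord q 0)) ->
  partial m F p = if Nat.eqb m 0 then Derive h (coord p 0) else 0.
Proof.
intros HF. unfold partial. destruct p as [[a b] c].
destruct m as [|[|m]]; simpl.
- apply Derive_ext. intro t. rewrite HF. reflexivity.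
- rewrite <- (Derive_const (h a) b). apply Derive_ext. intro t. rewrite HF. reflexivity.
- rewrite <- (Derive_const (h a) c). apply Derive_ext. intro t. rewrite HF. reflexivity.
Qed.

Lemma pW f1 f2 f3 V1 V2 V3 k m p :
  partial k (frame_field f1 f2 f3 V1 V2 V3 m) p =
  if Nat.eqb k 0 then Derive (wfun f1 f2 f3 V1 V2 V3 m) (coord p 0) else 0.
Proof. apply partial_lift. intro; apply fW. Qed.

Lemma pG f1 f2 f3 m i j p :
  partial m (diag_metric f1 f2 f3 i j) p =
  if Nat.eqb m 0 then Derive (fun t => if Nat.eqb i j then 1 / (fam3 f1 f2 f3 i t) ^ 2 else 0) (coord p 0) else 0.
Proof. apply partial_lift. intro; reflexivity. Qed.

Lemma D_inv2 (h : R -> R) (x : R) : ex_derive h x -> h x <> 0 ->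
  Derive (fun t => 1 / (h t) ^ 2) x = -2 * Derive h x / (h x) ^ 3.
Proof.
intros He Hn. apply is_derive_unique. auto_derive.
- split; [exact He|split; [|exact I]]. intro E; apply Hn; apply Rmult_integral in E; destruct E as [E|E]; [exact E|]; apply Rmult_integral in E; lra.
- set (d := Derive _ x). unfold d. change (Derive (fun x0 => h x0) x) with (Derive h x). field. exact Hn.
Qed.

Lemma D_inv2' (h : R -> R) (x : R) : ex_derive h x -> h x <> 0 ->
  Derive (fun t => 1 / (h t * (h t * 1))) x = -2 * Derive h x / (h x) ^ 3.
Proof. intros; rewrite <- D_inv2; auto. Qed.

Lemma const_of_D0 (h : R -> R) : (forall x, ex_derive h x) -> (forall x, Derive h x = 0) ->
  forall t, h t = h 0.
Proof.
intros He H0 t.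
destruct (MVT_gen h 0 t (Derive h)) as [c [_ Hc]].
- intros x _. apply Derive_correct, He.
- intros x _. apply continuity_pt_filterlim. apply (@ex_derive_continuous R_AbsRing R_NormedModule). apply He.
- rewrite H0 in Hc. lra.
Qed.

Section S.
Variables f1 f2 f3 V1 V2 V3 : R -> R.
Hypotheses (nf1 : forall t, f1 t <> 0) (nf2 : forall t, f2 t <> 0) (nf3 : forall t, f3 t <> 0).
Hypotheses (df1 : forall t, ex_derive f1 t) (df2 : forall t, ex_derive f2 t) (df3 : forall t, ex_derive f3 t).
Hypotheses (dV1 : forall t, ex_derive V1 t) (dV2 : forall t, ex_derive V2 t) (dV3 : forall t, ex_derive V3 t).

Lemma LD i j p : (i < 3)%nat -> (j < 3)%nat ->
  let x := coord p 0 in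
  lie_deriv_metric (frame_field f1 f2 f3 V1 V2 V3) (diag_metric f1 f2 f3) i j p =
  match i, j with
  | O, O => 2 * Derive V1 x / f1 x
  | O, S O | S O, O => Derive (fun t => V2 t * f2 t) x / (f2 x)^2
  | O, _ | _, O => Derive (fun t => V3 t * f3 t) x / (f3 x)^2
  | S O, S O => -2 * f1 x / (f2 x)^3 * (V1 x * Derive f2 x)
  | S O, _ | _, S O => 0
  | _, _ => -2 * f1 x / (f3 x)^3 * (V1 x * Derive f3 x)
  end.
Proof.
intros Hi Hj x.
unfold lie_deriv_metric, sum3.
rewrite !pW, !pG, !fW. fold x. unfold diag_metric, lift1. fold x.
destruct i as [|[|[|i]]]; try lia; destruct j as [|[|[|j]]]; try lia; simpl.
all: rewrite ?Derive_const, ?D_inv2' by auto.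
all: try (rewrite Derive_mult by auto).
all: try (field; split; auto).
all: try (field; auto).
Qed.

Lemma LDx i j x : (i < 3)%nat -> (j < 3)%nat ->
  lie_deriv_metric (frame_field f1 f2 f3 V1 V2 V3) (diag_metric f1 f2 f3) i j (x,0,0) =
  match i, j with
  | O, O => 2 * Derive V1 x / f1 x
  | O, S O | S O, O => Derive (fun t => V2 t * f2 t) x / (f2 x)^2
  | O, _ | _, O => Derive (fun t => V3 t * f3 t) x / (f3 x)^2
  | S O, S O => -2 * f1 x / (f2 x)^3 * (V1 x * Derive f2 x)
  | S O, _ | _, S O => 0
  | _, _ => -2 * f1 x / (f3 x)^3 * (V1 x * Derive f3 x)
  end.
Proof. intros Hi Hj. exact (LD i j (x,0,0) Hi Hj). Qed.

Lemma main_sec :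
  Killing (frame_field f1 f2 f3 V1 V2 V3) (diag_metric f1 f2 f3) <->
  ((exists c1 c2 c3 : R, c1 <> 0 /\
      (forall t, V1 t = c1) /\ (forall t, V2 t = c2) /\ (forall t, V3 t = c3) /\
      (exists a2, forall t, f2 t = a2) /\ (exists a3, forall t, f3 t = a3))
   \/
   ((forall t, V1 t = 0) /\
    exists c2 c3 : R, (forall t, V2 t = c2 / f2 t) /\ (forall t, V3 t = c3 / f3 t))).
Proof.
split.
- intro K.
  assert (H00 : forall x, Derive V1 x = 0).
  { intro x. pose proof (LDx 0 0 x) as L. rewrite K in L by lia.
    assert (E : Derive V1 x = (2 * Derive V1 x / f1 x) * f1 x / 2) by (field; auto).
    rewrite E, <- L by lia. field. }
  assert (H11 : forall x, V1 x * Derive f2 x = 0).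
  { intro x. pose proof (LDx 1 1 x) as L. rewrite K in L by lia.
    assert (E : V1 x * Derive f2 x = (-2 * f1 x / (f2 x)^3 * (V1 x * Derive f2 x)) * ((f2 x)^3 / (-2 * f1 x))) by (field; auto).
    rewrite E, <- L by lia. field. auto. }
  assert (H22 : forall x, V1 x * Derive f3 x = 0).
  { intro x. pose proof (LDx 2 2 x) as L. rewrite K in L by lia.
    assert (E : V1 x * Derive f3 x = (-2 * f1 x / (f3 x)^3 * (V1 x * Derive f3 x)) * ((f3 x)^3 / (-2 * f1 x))) by (field; auto).
    rewrite E, <- L by lia. field. auto. }
  assert (H01 : forall x, Derive (fun t => V2 t * f2 t) x = 0).
  { intro x. pose proof (LDx 0 1 x) as L. rewrite K in L by lia.
    assert (E : Derive (fun t => V2 t * f2 t) x = (Derive (fun t => V2 t * f2 t) x / (f2 x)^2) * (f2 x)^2) by (field; auto).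
    rewrite E, <- L by lia. ring. }
  assert (H02 : forall x, Derive (fun t => V3 t * f3 t) x = 0).
  { intro x. pose proof (LDx 0 2 x) as L. rewrite K in L by lia.
    assert (E : Derive (fun t => V3 t * f3 t) x = (Derive (fun t => V3 t * f3 t) x / (f3 x)^2) * (f3 x)^2) by (field; auto).
    rewrite E, <- L by lia. ring. }
  pose proof (const_of_D0 V1 dV1 H00) as C1.
  assert (C2 : forall t, V2 t * f2 t = V2 0 * f2 0).
  { apply (const_of_D0 (fun t => V2 t * f2 t)); auto. intro; apply ex_derive_mult; auto. }
  assert (C3 : forall t, V3 t * f3 t = V3 0 * f3 0).
  { apply (const_of_D0 (fun t => V3 t * f3 t)); auto. intro; apply ex_derive_mult; auto. }
  destruct (Req_dec (V1 0) 0) as [Z|NZ].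
  + right. split.
    * intro t. rewrite C1. exact Z.
    * exists (V2 0 * f2 0), (V3 0 * f3 0). split; intro t.
      -- rewrite <- (C2 t). field. auto.
      -- rewrite <- (C3 t). field. auto.
  + assert (F2 : forall t, f2 t = f2 0).
    { intro t0; apply (const_of_D0 f2); auto. intro x. specialize (H11 x). rewrite C1 in H11.
      apply Rmult_integral in H11. destruct H11; [contradiction|auto]. }
    assert (F3 : forall t, f3 t = f3 0).
    { intro t0; apply (const_of_D0 f3); auto. intro x. specialize (H22 x). rewrite C1 in H22.
      apply Rmult_integral in H22. destruct H22; [contradiction|auto]. }
    left. exists (V1 0), (V2 0), (V3 0). split; [exact NZ|]. split; [exact C1|].
    split; [|split; [|split]].
    * intro t. apply (Rmult_eq_reg_r (f2 t)); auto. rewrite (C2 t), (F2 t). reflexivity.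
    * intro t. apply (Rmult_eq_reg_r (f3 t)); auto. rewrite (C3 t), (F3 t). reflexivity.
    * exists (f2 0); auto.
    * exists (f3 0); auto.
- intro Hr.
  assert (A : (forall x, Derive V1 x = 0) /\ (forall x, V1 x * Derive f2 x = 0) /\
              (forall x, V1 x * Derive f3 x = 0) /\
              (forall x, Derive (fun t => V2 t * f2 t) x = 0) /\
              (forall x, Derive (fun t => V3 t * f3 t) x = 0)).
  { destruct Hr as [[c1 [c2 [c3 [_ [e1 [e2 [e3 [[a2 g2] [a3 g3]]]]]]]]] | [e1 [c2 [c3 [e2 e3]]]]].
    - repeat split; intro x.
      + rewrite (Derive_ext V1 (fun _ => c1)) by auto. apply Derive_const.
      + rewrite (Derive_ext f2 (fun _ => a2)) by auto. rewrite Derive_const. ring.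
      + rewrite (Derive_ext f3 (fun _ => a3)) by auto. rewrite Derive_const. ring.
      + rewrite (Derive_ext _ (fun _ => c2 * a2)). apply Derive_const. intro; rewrite e2, g2; auto.
      + rewrite (Derive_ext _ (fun _ => c3 * a3)). apply Derive_const. intro; rewrite e3, g3; auto.
    - repeat split; intro x.
      + rewrite (Derive_ext V1 (fun _ => 0)) by auto. apply Derive_const.
      + rewrite e1. ring.
      + rewrite e1. ring.
      + rewrite (Derive_ext _ (fun _ => c2)). apply Derive_const. intro; rewrite e2; field; auto.
      + rewrite (Derive_ext _ (fun _ => c3)). apply Derive_const. intro; rewrite e3; field; auto. }
  destruct A as [A1 [A2 [A3 [A4 A5]]]].
  intros i j p Hi Hj. rewrite LD by auto. cbv zeta.
  destruct i as [|[|[|i]]]; try lia; destruct j as [|[|[|j]]]; try lia;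
  rewrite ?A1, ?A2, ?A3, ?A4, ?A5; field; auto.
Qed.
End S.

Theorem mainTheorem7 (f1 f2 f3 V1 V2 V3 : R -> R)
  (sf1 : smooth f1) (sf2 : smooth f2) (sf3 : smooth f3)
  (nf1 : forall t, f1 t <> 0) (nf2 : forall t, f2 t <> 0) (nf3 : forall t, f3 t <> 0)
  (sV1 : smooth V1) (sV2 : smooth V2) (sV3 : smooth V3) :
  Killing (frame_field f1 f2 f3 V1 V2 V3) (diag_metric f1 f2 f3) <->
  ((exists c1 c2 c3 : R, c1 <> 0 /\
      (forall t, V1 t = c1) /\ (forall t, V2 t = c2) /\ (forall t, V3 t = c3) /\
      (exists a2, forall t, f2 t = a2) /\ (exists a3, forall t, f3 t = a3))
   \/
   ((forall t, V1 t = 0) /\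
    exists c2 c3 : R, (forall t, V2 t = c2 / f2 t) /\ (forall t, V3 t = c3 / f3 t))).
Proof.
  apply main_sec; auto; intro t.
  - exact (sf1 1%nat t).
  - exact (sf2 1%nat t).
  - exact (sf3 1%nat t).
  - exact (sV1 1%nat t).
  - exact (sV2 1%nat t).
  - exact (sV3 1%nat t).
Qed.
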